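(* Let $\mathcal E^{(-1)}=0$ and, for $q\in\mathbb Z_+$, $\mathcal E^{(q)}=\{X\in\mathfrak D_V\mid [D_\mu,X]\in\mathcal E^{(q-1)},\ \mu=1,\dots,m\}$. Then for every $q\in\mathbb Z_+$, $$\mathcal E^{(q)}=\bigoplus_{k\in\mathsf I,\ |k|\le q}\mathcal E^k,\qquad \mathcal E^k=\Big\{\sum_{\alpha,i}(\varepsilon^k_\phi)^\alpha_i\,\partial_{u^\alpha_i}\ \Big|\ \phi\in\mathcal A^{\mathsf A}\Big\};$$ that is, a vertical differentiation $X=\sum\zeta^\alpha_i\partial_{u^\alpha_i}$ lies in $\mathcal E^{(q)}$ if and only if $\zeta=\sum_{|k|\le q}\varepsilon^k_{\phi_k}$ for some $\phi_k\in\mathcal A^{\mathsf A}$, and these $\phi_k$ are unique.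
   Context: $\mathbb F\in\{\mathbb R,\mathbb C\}$, $m\in\mathbb N$, $\mathsf A$ a finite index set, $\mathsf I=\mathbb Z_+^m$, $|k|=k^1+\dots+k^m$, $k\le i$ componentwise, $\binom{i}{k}=\prod_\mu\binom{i^\mu}{k^\mu}$, $(\mu)$ the multi-index with $1$ in position $\mu$. Variables $x^\mu$ on $\mathbb R^m$ and $u^\alpha_i$ ($\alpha\in\mathsf A$, $i\in\mathsf I$); $\mathcal A$ is the algebra of smooth $\mathbb F$-valued functions each depending on finitely many of these variables. $D_\mu=\partial_{x^\mu}+\sum_{\alpha,i}u^\alpha_{i+(\mu)}\partial_{u^\alpha_i}$, $D_j=D_1^{j^1}\cdots D_m^{j^m}$. $\mathfrak D_V$ is the space of vertical differentiations $X=\sum_{\alpha,i}\zeta^\alpha_i\partial_{u^\alpha_i}$ with arbitrary coefficients $\zeta^\alpha_i\in\mathcal A$ (each acts on $f\in\mathcal A$ as a finite sum); one has $[D_\mu,X]=\sum(D_\mu\zeta^\alpha_i-\zeta^\alpha_{i+(\mu)})\partial_{u^\alpha_i}$. For $k\in\mathsf I$, $\phi=(\phi^\alpha)\in\mathcal A^{\mathsf A}$: $(\varepsilon^k_\phi)^\alpha_i=\binom{i}{k}D_{i-k}\phi^\alpha$ if $k\le i$ and $0$ otherwise. *)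

(* Defs.v *)
From Stdlib Require Import Reals ClassicalEpsilon.
From mathcomp Require Import all_boot.
Set Implicit Arguments. Unset Strict Implicit. Unset Printing Implicit Defensive.

Section Jet.
Variables (m : nat) (Aset : finType).

Definition MI := {ffun 'I_m -> nat}.
Definition mabs (i : MI) : nat := \sum_(mu < m) i mu.
Definition mle (k i : MI) : bool := [forall mu, k mu <= i mu].
Definition msub (i k : MI) : MI := [ffun mu => i mu - k mu].
Definition mshift (mu : 'I_m) (i : MI) : MI := [ffun nu => i nu + (nu == mu)].
Definition mbinom (i k : MI) : nat := \prod_(mu < m) 'C(i mu, k mu).

(* variables: x^mu (inl mu) and u^alpha_i (inr (alpha, i)) *)
Definition Var := ('I_m + (Aset * MI))%type.
Definition ord (v : Var) : nat :=
  match v with inl _ => 0 | inr (_, i) => mabs i end.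
Definition Point := Var -> R.
(* F-valued functions, F = C represented as R*R (real, imaginary part) *)
Definition Fn := Point -> (R * R)%type.

Definition upd (p : Point) (v : Var) (t : R) : Point :=
  fun w => if w == v then t else p w.

Definition depends_upto (n : nat) (f : Point -> R) : Prop :=
  forall p p' : Point, (forall v, ord v <= n -> p v = p' v) -> f p = f p'.

Definition cont_upto (n : nat) (f : Point -> R) : Prop :=
  forall (p : Point) (e : R), Rlt 0 e -> exists d : R, Rlt 0 d /\
    forall p' : Point, (forall v, ord v <= n -> Rlt (Rabs (Rminus (p' v) (p v))) d) ->
      Rlt (Rabs (Rminus (f p') (f p))) e.

Fixpoint Ck (n k : nat) (f : Point -> R) : Prop :=
  match k with
  | 0 => cont_upto n f
  | k'.+1 => cont_upto n f /\
      forall v : Var, exists g : Point -> R,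
        (forall p, derivable_pt_lim (fun t => f (upd p v t)) (p v) (g p)) /\
        Ck n k' g
  end.

Definition smooth_upto (n : nat) (f : Point -> R) : Prop :=
  depends_upto n f /\ forall k, Ck n k f.

(* the algebra A (F = R if cplx = false, F = C if cplx = true) *)
Definition inA (cplx : bool) (f : Fn) : Prop :=
  exists n, smooth_upto n (fun p => fst (f p)) /\
            smooth_upto n (fun p => snd (f p)) /\
            (cplx = false -> forall p, snd (f p) = R0).

(* derivative of a real function at a point (junk value 0 if none) *)
Definition Dlim (g : R -> R) (x : R) : R :=
  epsilon (inhabits R0) (fun l => derivable_pt_lim g x l).

(* total derivative D_mu = d/dx^mu + sum u^alpha_{i+(mu)} d/du^alpha_i,
   as the directional derivative along the vector field it defines *)
Definition wvec (mu : 'I_m) (p : Point) : Point :=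
  fun v => match v with
           | inl nu => if nu == mu then R1 else R0
           | inr (a, i) => p (inr (a, mshift mu i))
           end.
Definition Dtot (mu : 'I_m) (f : Fn) : Fn :=
  fun p => (Dlim (fun t => fst (f (fun v => Rplus (p v) (Rmult t (wvec mu p v))))) R0,
            Dlim (fun t => snd (f (fun v => Rplus (p v) (Rmult t (wvec mu p v))))) R0).

Definition Dj (j : MI) (f : Fn) : Fn :=
  foldr (fun mu g => iter (j mu) (Dtot mu) g) f (enum 'I_m).

Definition zeroF : Fn := fun _ => (R0, R0).
Definition addF (f g : Fn) : Fn :=
  fun p => (Rplus (fst (f p)) (fst (g p)), Rplus (snd (f p)) (snd (g p))).
Definition subF (f g : Fn) : Fn :=
  fun p => (Rminus (fst (f p)) (fst (g p)), Rminus (snd (f p)) (snd (g p))).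
Definition nmulF (n : nat) (f : Fn) : Fn :=
  fun p => (Rmult (INR n) (fst (f p)), Rmult (INR n) (snd (f p))).
Definition sumF (s : seq Fn) : Fn := foldr addF zeroF s.

(* coefficient families zeta^alpha_i of vertical differentiations *)
Definition VF := Aset -> MI -> Fn.
Definition inDV (cplx : bool) (z : VF) : Prop := forall a i, inA cplx (z a i).

(* coefficients of [D_mu, X] *)
Definition commD (mu : 'I_m) (z : VF) : VF :=
  fun a i => subF (Dtot mu (z a i)) (z a (mshift mu i)).

Definition eps (k : MI) (phi : Aset -> Fn) : VF :=
  fun a i => if mle k i then nmulF (mbinom i k) (Dj (msub i k) (phi a))
             else zeroF.

(* Eshift q = E^{(q-1)}; Eshift 0 = E^{(-1)} = 0 *)
Fixpoint Eshift (cplx : bool) (q : nat) (z : VF) : Prop :=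
  match q with
  | 0 => forall a i p, z a i p = (R0, R0)
  | q'.+1 => inDV cplx z /\ forall mu, Eshift cplx q' (commD mu z)
  end.
Definition Ecal (cplx : bool) (q : nat) (z : VF) : Prop := Eshift cplx q.+1 z.

Definition mis (q : nat) : seq MI :=
  map (fun k : {ffun 'I_m -> 'I_q.+1} => [ffun mu => nat_of_ord (k mu)] : MI)
      (filter (fun k : {ffun 'I_m -> 'I_q.+1} => \sum_(mu < m) nat_of_ord (k mu) <= q)
              (enum {ffun 'I_m -> 'I_q.+1})).

Definition sumEps (q : nat) (phi : MI -> Aset -> Fn) : VF :=
  fun a i => sumF [seq eps k (phi k) a i | k <- mis q].

End Jet.

(* Main.v *)
Require Import Defs.
From Stdlib Require Import Reals.
From mathcomp Require Import all_boot.
From Coquelicot Require Import Coquelicot.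
Require Import Defs.
From Stdlib Require Import Reals Lra Lia FunctionalExtensionality ClassicalEpsilon.
From mathcomp Require Import all_boot.
From mathcomp Require Import zify.
Set Implicit Arguments. Unset Strict Implicit. Unset Printing Implicit Defensive.

Open Scope R_scope.

Section Analysis.
Variables (m : nat) (Aset : finType).
Local Notation Pt := (Point m Aset).
Local Notation V := (Var m Aset).
Implicit Types (f g : Pt -> R) (p : Pt) (v w : V).

Definition sumR {T : Type} (s : seq T) (f : T -> R) : R :=
  foldr (fun x acc => f x + acc) 0 s.

Definition HasPartial (v : V) (f g : Pt -> R) : Prop :=
  forall p, derivable_pt_lim (fun t => f (upd p v t)) (p v) (g p).
Definition Pd (v : V) (f : Pt -> R) : Pt -> R :=
  fun p => Dlim (fun t => f (upd p v t)) (p v).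

Lemma Dlim_eq (g : R -> R) x l : derivable_pt_lim g x l -> Dlim g x = l.
Proof.
move=> H. rewrite /Dlim.
have ex : exists l, derivable_pt_lim g x l by exists l.
have := epsilon_spec (inhabits R0) _ ex.
move=> H2; exact: (uniqueness_limite _ _ _ _ H2 H).
Qed.

Lemma Dlim_const c x : Dlim (fun _ => c) x = 0.
Proof. apply: Dlim_eq. apply: derivable_pt_lim_const. Qed.

Lemma upd_same (p : Pt) v : upd p v (p v) = p.
Proof. apply: functional_extensionality => w; rewrite /upd; case: eqP => [->|] //. Qed.
Lemma upd_eq (p : Pt) v t : upd p v t v = t.
Proof. by rewrite /upd eqxx. Qed.
Lemma upd_neq (p : Pt) v t w : w != v -> upd p v t w = p w.
Proof. by rewrite /upd => /negbTE ->. Qed.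
Lemma upd_upd (p : Pt) v s t : upd (upd p v s) v t = upd p v t.
Proof. apply: functional_extensionality => w; rewrite /upd; by case: eqP. Qed.

Lemma HasPartial_Pd v f g : HasPartial v f g -> Pd v f = g.
Proof. move=> H; apply: functional_extensionality => p; exact: Dlim_eq. Qed.

Lemma mul_close x0 y0 e : 0 < e -> exists d, 0 < d /\
  forall x y, Rabs (x - x0) < d -> Rabs (y - y0) < d -> Rabs (x * y - x0 * y0) < e.
Proof.
move=> He.
have HM : 0 < 1 + Rabs x0 + Rabs y0 by have := Rabs_pos x0; have := Rabs_pos y0; lra.
exists (Rmin 1 (e / (1 + Rabs x0 + Rabs y0))); split.
  apply: Rmin_pos; first lra. apply: Rdiv_lt_0_compat => //.
move=> x y Hx Hy.
have Hx1 := Rlt_le_trans _ _ _ Hx (Rmin_l _ _).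
have Hy1 := Rlt_le_trans _ _ _ Hy (Rmin_l _ _).
have Hx2 := Rlt_le_trans _ _ _ Hx (Rmin_r _ _).
have Hy2 := Rlt_le_trans _ _ _ Hy (Rmin_r _ _).
set d := e / (1 + Rabs x0 + Rabs y0) in Hx2 Hy2.
have Hd : d * (1 + Rabs x0 + Rabs y0) = e by rewrite /d; field; lra.
have -> : x * y - x0 * y0 = (x - x0) * (y - y0) + x0 * (y - y0) + y0 * (x - x0) by ring.
set a := x - x0 in Hx1 Hx2 *. set b := y - y0 in Hy1 Hy2 *.
have h1 : Rabs (a * b) <= Rabs a by rewrite Rabs_mult; have := Rabs_pos a; have := Rabs_pos b; nra.
have h2 : Rabs (x0 * b) <= Rabs x0 * d by rewrite Rabs_mult; have := Rabs_pos x0; nra.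
have h3 : Rabs (y0 * a) <= Rabs y0 * d by rewrite Rabs_mult; have := Rabs_pos y0; nra.
have := Rabs_triang (a * b + x0 * b) (y0 * a).
have := Rabs_triang (a * b) (x0 * b).
have := Rabs_pos x0; have := Rabs_pos y0.
nra.
Qed.

Lemma cont_const n c : cont_upto n (fun _ : Pt => c).
Proof. move=> p e He; exists 1; split; first lra. move=> p' _; rewrite Rminus_diag Rabs_R0 //. Qed.

Lemma cont_coord n (v : V) : (ord v <= n)%N -> cont_upto n (fun p : Pt => p v).
Proof. move=> Hv p e He; exists e; split => // p' H; exact: H. Qed.

Lemma cont_add n (f g : Pt -> R) : cont_upto n f -> cont_upto n g -> cont_upto n (fun p => f p + g p).
Proof.
move=> Hf Hg p e He.
have [d1 [Hd1 H1]] := Hf p (e/2) ltac:(lra).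
have [d2 [Hd2 H2]] := Hg p (e/2) ltac:(lra).
exists (Rmin d1 d2); split; first exact: Rmin_pos.
move=> p' H.
have A := H1 p' (fun v hv => Rlt_le_trans _ _ _ (H v hv) (Rmin_l _ _)).
have B := H2 p' (fun v hv => Rlt_le_trans _ _ _ (H v hv) (Rmin_r _ _)).
have -> : f p' + g p' - (f p + g p) = (f p' - f p) + (g p' - g p) by ring.
have := Rabs_triang (f p' - f p) (g p' - g p). lra.
Qed.

Lemma cont_mul n (f g : Pt -> R) : cont_upto n f -> cont_upto n g -> cont_upto n (fun p => f p * g p).
Proof.
move=> Hf Hg p e He.
have [d [Hd Hm]] := mul_close (f p) (g p) He.
have [d1 [Hd1 H1]] := Hf p d Hd.
have [d2 [Hd2 H2]] := Hg p d Hd.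
exists (Rmin d1 d2); split; first exact: Rmin_pos.
move=> p' H. apply: Hm.
exact: H1 p' (fun v hv => Rlt_le_trans _ _ _ (H v hv) (Rmin_l _ _)).
exact: H2 p' (fun v hv => Rlt_le_trans _ _ _ (H v hv) (Rmin_r _ _)).
Qed.

Lemma cont_mono n n' (f : Pt -> R) : (n <= n')%N -> cont_upto n f -> cont_upto n' f.
Proof.
move=> Hn Hf p e He. have [d [Hd H]] := Hf p e He. exists d; split => // p' Hp.
apply: H => v hv; apply: Hp; exact: leq_trans hv Hn.
Qed.

Lemma depends_mono n n' (f : Pt -> R) : (n <= n')%N -> depends_upto n f -> depends_upto n' f.
Proof.
move=> Hn Hf p p' H; apply: Hf => v hv; apply: H; exact: leq_trans hv Hn.
Qed.

Lemma Ck_cont n k f : Ck n k f -> cont_upto n f.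
Proof. by case: k => [|k] //= []. Qed.

Lemma Ck_partial n k f v : Ck n k.+1 f -> HasPartial v f (Pd v f) /\ Ck n k (Pd v f).
Proof.
move=> [_ H]; have [g [Hg Cg]] := H v.
by rewrite (HasPartial_Pd Hg).
Qed.

Lemma Ck_down n k f : Ck n k.+1 f -> Ck n k f.
Proof.
elim: k f => [|k IH] f /=; first by case.
move=> [Hc H]; split => // v. have [g [Hg Cg]] := H v. exists g; split => //. exact: IH.
Qed.

Lemma Ck_le n k k' f : (k' <= k)%N -> Ck n k f -> Ck n k' f.
Proof.
move=> Hk; elim: k Hk f => [|k IH] Hk f.
  by rewrite leqn0 in Hk; move/eqP: Hk => ->.
rewrite leq_eqVlt in Hk; case/orP: Hk => [/eqP -> //|Hk] Hf.
apply: IH => //. exact: Ck_down.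
Qed.

Lemma Ck_mono n n' k f : (n <= n')%N -> Ck n k f -> Ck n' k f.
Proof.
move=> Hn; elim: k f => [|k IH] f /=; first exact: cont_mono.
move=> [Hc H]; split; first exact: cont_mono Hc.
move=> v; have [g [Hg Cg]] := H v; exists g; split => //; exact: IH.
Qed.

Lemma Ck_const n k c : Ck n k (fun _ : Pt => c).
Proof.
elim: k c => [|k IH] c /=; first exact: cont_const.
split; first exact: cont_const.
move=> v; exists (fun _ => 0); split => //. move=> p; exact: derivable_pt_lim_const.
Qed.

Lemma Ck_add n k f g : Ck n k f -> Ck n k g -> Ck n k (fun p => f p + g p).
Proof.
elim: k f g => [|k IH] f g /=; first exact: cont_add.
move=> [Cf Hf] [Cg Hg]; split; first exact: cont_add.
move=> v; have [f' [Hf' Cf']] := Hf v; have [g' [Hg' Cg']] := Hg v.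
exists (fun p => f' p + g' p); split; last exact: IH.
move=> p; exact: derivable_pt_lim_plus (Hf' p) (Hg' p).
Qed.

Lemma Ck_mul n k f g : Ck n k f -> Ck n k g -> Ck n k (fun p => f p * g p).
Proof.
elim: k f g => [|k IH] f g /=; first exact: cont_mul.
move=> [Cf Hf] [Cg Hg]; split; first exact: cont_mul.
move=> v; have [f' [Hf' Cf']] := Hf v; have [g' [Hg' Cg']] := Hg v.
exists (fun p => f' p * g p + f p * g' p); split.
  move=> p; have := derivable_pt_lim_mult (fun t => f (upd p v t)) (fun t => g (upd p v t)) _ _ _ (Hf' p) (Hg' p).
  by rewrite upd_same.
apply: Ck_add; apply: IH => //; apply: Ck_down; by split.
Qed.

Lemma Ck_coord n k (w : V) : (ord w <= n)%N -> Ck n k (fun p : Pt => p w).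
Proof.
move=> Hw; case: k => [|k] /=; first exact: cont_coord.
split; first exact: cont_coord.
move=> v; exists (fun _ => if w == v then 1 else 0); split; last exact: Ck_const.
move=> p; rewrite /upd; case: eqP => [E|_] /=.
  exact: derivable_pt_lim_id.
exact: derivable_pt_lim_const.
Qed.

Lemma Ck_sum {T : eqType} n k (s : seq T) (F : T -> Pt -> R) :
  (forall x, x \in s -> Ck n k (F x)) -> Ck n k (fun p => sumR s (fun x => F x p)).
Proof.
elim: s => [|x s IH] H /=; first exact: Ck_const.
apply: Ck_add; first by apply: H; rewrite inE eqxx.
apply: IH => y hy; apply: H; by rewrite inE hy orbT.
Qed.

Lemma Ck_ext n k f g : (forall p, f p = g p) -> Ck n k f -> Ck n k g.
Proof. move=> H; have -> : g = f by apply: functional_extensionality => p; rewrite H. done. Qed.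

Definition Sm n (f : Pt -> R) := smooth_upto n f.

Lemma Sm_mono n n' f : (n <= n')%N -> Sm n f -> Sm n' f.
Proof. move=> Hn [D C]; split; first exact: depends_mono D. move=> k; exact: Ck_mono (C k). Qed.

Lemma Sm_const n c : Sm n (fun _ => c).
Proof. split; last by move=> k; exact: Ck_const. by move=> p p' _. Qed.

Lemma Sm_coord n w : (ord w <= n)%N -> Sm n (fun p : Pt => p w).
Proof. move=> Hw; split; last by move=> k; exact: Ck_coord. move=> p p' H; exact: H. Qed.

Lemma Sm_add n f g : Sm n f -> Sm n g -> Sm n (fun p => f p + g p).
Proof.
move=> [Df Cf] [Dg Cg]; split; last by move=> k; exact: Ck_add.
move=> p p' H; by rewrite (Df p p' H) (Dg p p' H).
Qed.

Lemma Sm_mul n f g : Sm n f -> Sm n g -> Sm n (fun p => f p * g p).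
Proof.
move=> [Df Cf] [Dg Cg]; split; last by move=> k; exact: Ck_mul.
move=> p p' H; by rewrite (Df p p' H) (Dg p p' H).
Qed.

Lemma Sm_sum {T : eqType} n (s : seq T) (F : T -> Pt -> R) :
  (forall x, x \in s -> Sm n (F x)) -> Sm n (fun p => sumR s (fun x => F x p)).
Proof.
elim: s => [|x s IH] H /=; first exact: Sm_const.
apply: Sm_add; first by apply: H; rewrite inE eqxx.
apply: IH => y hy; apply: H; by rewrite inE hy orbT.
Qed.

Lemma Sm_ext n f g : (forall p, f p = g p) -> Sm n f -> Sm n g.
Proof. move=> H; have -> : g = f by apply: functional_extensionality => p; rewrite H. done. Qed.

Lemma Pd_high n f v : depends_upto n f -> (n < ord v)%N -> forall p, Pd v f p = 0.
Proof.
move=> Df Hv p; rewrite /Pd.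
have -> : (fun t => f (upd p v t)) = (fun _ => f p).
  apply: functional_extensionality => t; apply: Df => w hw.
  rewrite upd_neq //; apply/eqP => E; move: Hv; rewrite -E; by rewrite ltnNge hw.
exact: Dlim_const.
Qed.

Lemma Sm_partial n f v : Sm n f -> HasPartial v f (Pd v f) /\ Sm n (Pd v f).
Proof.
move=> [Df Cf]; have [HP _] := Ck_partial v (Cf 1%N).
split => //; split; last by move=> k; have [_ ] := Ck_partial v (Cf k.+1).
move=> p p' H.
case: (leqP (ord v) n) => hv; last by rewrite !(Pd_high Df hv).
rewrite /Pd (H v hv).
have -> : (fun t => f (upd p v t)) = (fun t => f (upd p' v t)) => //.
apply: functional_extensionality => t; apply: Df => w hw.
rewrite /upd; case: eqP => // _; exact: H.
Qed.

End Analysis.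

Open Scope R_scope.

Lemma mvt_gen (phi phi' : R -> R) a b : (forall c, derivable_pt_lim phi c (phi' c)) ->
  exists c, Rabs (c - a) <= Rabs (b - a) /\ phi b - phi a = phi' c * (b - a).
Proof.
move=> H.
case: (Rtotal_order a b) => [Hab|[Hab|Hab]].
- have [c [E Hc]] := MVT_cor2 phi phi' a b Hab (fun c _ => H c).
  exists c; split => //. rewrite !Rabs_right; lra.
- subst b; exists a; split; first by rewrite Rminus_diag Rabs_R0; lra. ring.
- have [c [E Hc]] := MVT_cor2 phi phi' b a Hab (fun c _ => H c).
  exists c; split. rewrite (Rabs_left (b - a)); last lra.
  rewrite Rabs_left1; lra. lra.
Qed.

Lemma sumR_abs_le {T : eqType} (s : seq T) (F : T -> R) x : x \in s -> Rabs (F x) <= sumR s (fun y => Rabs (F y)).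
Proof.
elim: s => [|y s IH] //= ; rewrite inE; case/orP => [/eqP ->|H].
  have : 0 <= sumR s (fun y => Rabs (F y)).
    elim: s {IH} => [|z s IH'] /=; first lra. have := Rabs_pos (F z); lra.
  lra.
have := IH H; have := Rabs_pos (F y); lra.
Qed.

Lemma sumR_ge0 {T : Type} (s : seq T) (F : T -> R) : (forall x, 0 <= F x) -> 0 <= sumR s F.
Proof. move=> H; elim: s => [|x s IH] /=; first lra. have := H x; lra. Qed.

Section Chain.
Variables (m : nat) (Aset : finType).
Local Notation Pt := (Point m Aset).
Local Notation V := (Var m Aset).
Implicit Types (f g : Pt -> R) (p : Pt) (v w : V).

Definition shL (L : seq V) p t (w : Pt) : Pt := fun u => if u \in L then p u + t * w u else p u.

Lemma chain_shL n f (w : Pt) :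
  (forall v, HasPartial v f (Pd v f) /\ cont_upto n (Pd v f)) ->
  forall L, uniq L -> forall p,
  derivable_pt_lim (fun t => f (shL L p t w)) 0 (sumR L (fun v => w v * Pd v f p)).
Proof.
move=> HP; elim=> [|v L IH] /=.
  move=> _ p. have -> : (fun t => f (shL [::] p t w)) = (fun _ => f p).
    by apply: functional_extensionality => t; congr f.
  exact: derivable_pt_lim_const.
case/andP=> vL uL p eps Heps.
have [d2 Hd2] := IH uL p (eps/2) ltac:(lra).
set a := Rabs (w v).
have Ha : 0 <= a := Rabs_pos _.
have [d1 [Hd1 Hc]] := (proj2 (HP v)) p (eps/2/(a+1)) ltac:(apply: Rdiv_lt_0_compat; lra).
set M := sumR L (fun u => Rabs (w u)) + a + 1.
have HM0 : 0 <= sumR L (fun u => Rabs (w u)) by apply: sumR_ge0 => x; exact: Rabs_pos.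
have HM : 0 < M by rewrite /M; lra.
have Hdel : 0 < Rmin d2 (d1 / M) by apply: Rmin_pos; [exact: cond_pos | exact: Rdiv_lt_0_compat].
exists (mkposreal _ Hdel) => h Hh /= Hhd.
have Hh2 : Rabs h < d2 := Rlt_le_trans _ _ _ Hhd (Rmin_l _ _).
have Hh1 : Rabs h * M < d1.
  have := Rlt_le_trans _ _ _ Hhd (Rmin_r _ _). move=> H.
  have : Rabs h < d1 / M by []. move=> H'. 
  apply (Rmult_lt_compat_r M) in H'; last lra. by rewrite /Rdiv Rmult_assoc Rinv_l ?Rmult_1_r in H'; lra.
set q := shL L p h w.
have qv : q v = p v by rewrite /q /shL (negbTE vL).
have E1 : shL (v :: L) p (0 + h) w = upd q v (p v + h * w v).
  apply: functional_extensionality => u; rewrite /shL /upd /q inE Rplus_0_l.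
  case: eqP => [->|_] //=; by rewrite (negbTE vL).
have E0 : shL (v :: L) p 0 w = p.
  apply: functional_extensionality => u; rewrite /shL; case: ifP => _ //; ring.
rewrite E1 E0.
have Hder : forall s, derivable_pt_lim (fun s => f (upd q v s)) s (Pd v f (upd q v s)).
  move=> s; have H := (proj1 (HP v)) (upd q v s); cbv beta in H.
  have E : (fun t => f (upd (upd q v s) v t)) = (fun t => f (upd q v t)).
    by apply: functional_extensionality => t; rewrite upd_upd.
  by rewrite E upd_eq in H.
have [c [Hc1 Hc2]] := @mvt_gen (fun s => f (upd q v s)) (fun s => Pd v f (upd q v s)) (p v) (p v + h * w v) Hder.
have Eq : upd q v (p v) = q by rewrite -qv upd_same.
rewrite Eq in Hc2.
have IHh := Hd2 h Hh Hh2. rewrite Rplus_0_l in IHh.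
have E0' : shL L p 0 w = p.
  apply: functional_extensionality => u; rewrite /shL; case: ifP => _ //; ring.
rewrite E0' -/q in IHh.
have Hcl : Rabs (Pd v f (upd q v c) - Pd v f p) < eps / 2 / (a + 1).
  apply: Hc => u hu. rewrite /upd; case: eqP => [->|Hne].
    move: Hc1; have -> : p v + h * w v - p v = h * w v by ring. rewrite Rabs_mult -/a => H.
    have : Rabs h * a <= Rabs h * M by apply: Rmult_le_compat_l; [exact: Rabs_pos | rewrite /M; lra].
    lra.
  rewrite /q /shL; case: ifP => huL; last by rewrite Rminus_diag Rabs_R0.
  have -> : p u + h * w u - p u = h * w u by ring.
  rewrite Rabs_mult.
  have := sumR_abs_le w huL. move=> H.
  have : Rabs h * Rabs (w u) <= Rabs h * M by apply: Rmult_le_compat_l; [exact: Rabs_pos | rewrite /M; lra].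
  lra.
have -> : (f (upd q v (p v + h * w v)) - f p) / h - (w v * Pd v f p + sumR L (fun v0 => w v0 * Pd v0 f p))
  = ((f (upd q v (p v + h * w v)) - f q) / h - w v * Pd v f p) + ((f q - f p) / h - sumR L (fun v0 => w v0 * Pd v0 f p)).
  field; exact: Hh.
rewrite Hc2.
have -> : Pd v f (upd q v c) * (p v + h * w v - p v) / h - w v * Pd v f p
   = w v * (Pd v f (upd q v c) - Pd v f p) by field; exact: Hh.
set X := (f q - f p) / h - _ in IHh *.
have := Rabs_triang (w v * (Pd v f (upd q v c) - Pd v f p)) X.
rewrite Rabs_mult -/a.
have : a * Rabs (Pd v f (upd q v c) - Pd v f p) <= a * (eps / 2 / (a + 1)).
  apply: Rmult_le_compat_l => //; lra.
have : a * (eps / 2 / (a + 1)) < eps / 2.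
  rewrite /Rdiv. have -> : a * (eps * / 2 * / (a + 1)) = (eps / 2) * (a / (a + 1)) by rewrite /Rdiv; ring.
  have : a / (a + 1) < 1.
    apply: (Rmult_lt_reg_r (a + 1)); first lra. rewrite /Rdiv Rmult_assoc Rinv_l; lra.
  move=> H; have : 0 < eps / 2 by lra. nra.
lra.
Qed.
End Chain.

Open Scope R_scope.

Section MI.
Variable m : nat.
Local Notation MI := (MI m).

Lemma mabs_ge (k : MI) mu : (k mu <= mabs k)%N.
Proof. rewrite /mabs (bigD1 mu) //=; exact: leq_addr. Qed.

Lemma mem_mis q (k : MI) : (k \in mis m q) = (mabs k <= q)%N.
Proof.
apply/idP/idP.
  case/mapP => kk; rewrite mem_filter => /andP [H _] ->.
  rewrite /mabs; under eq_bigr => mu _ do rewrite ffunE. done.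
move=> H; apply/mapP.
exists [ffun mu => inord (k mu) : 'I_q.+1].
  rewrite mem_filter mem_enum andbT.
  suff -> : (\sum_(mu < m) nat_of_ord ([ffun mu => inord (k mu) : 'I_q.+1] mu) = mabs k)%N by [].
  rewrite /mabs; apply: eq_bigr => mu _; rewrite ffunE inordK // ltnS; exact: leq_trans (mabs_ge k mu) H.
apply/ffunP => mu; rewrite !ffunE inordK // ltnS; exact: leq_trans (mabs_ge k mu) H.
Qed.

Lemma uniq_mis q : uniq (mis m q).
Proof.
rewrite map_inj_uniq; first by rewrite filter_uniq // enum_uniq.
move=> k1 k2 E; apply/ffunP => mu; apply: val_inj.
have := congr1 (fun f : MI => f mu) E; by rewrite /= !ffunE.
Qed.

Lemma mabs_shift mu (i : MI) : mabs (mshift mu i) = (mabs i).+1.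
Proof.
rewrite /mabs (bigD1 mu) //= [in RHS](bigD1 mu) //= ffunE eqxx addn1 addSn; congr (_.+1 + _)%N.
apply: eq_bigr => nu /negbTE H; by rewrite ffunE H addn0.
Qed.

Lemma mshiftC mu nu (i : MI) : mshift mu (mshift nu i) = mshift nu (mshift mu i).
Proof. apply/ffunP => x; rewrite !ffunE -!addnA; congr (_ + _)%N; exact: addnC. Qed.

End MI.

Section Vars.
Variables (m : nat) (Aset : finType).
Local Notation Pt := (Point m Aset).
Local Notation V := (Var m Aset).

Definition VL (N : nat) : seq V :=
  [seq inl mu | mu <- enum 'I_m] ++ [seq (inr (a, i) : V) | a <- enum Aset, i <- mis m N].

Lemma mem_VL N (v : V) : (v \in VL N) = (ord v <= N)%N.
Proof.
rewrite mem_cat; case: v => [mu|[a i]] /=.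
  by rewrite (map_f _ (mem_enum _ mu)).
have -> : ((inr (a, i) : V) \in [seq inl mu | mu <- enum 'I_m]) = false.
  by apply/mapP => -[x _].
rewrite /=; apply/allpairsP/idP => [[[x y] /= [_ Hy [_ ->]]]|H].
  by rewrite -mem_mis.
exists (a, i); split => //=; [exact: mem_enum | by rewrite mem_mis].
Qed.

Lemma uniq_VL N : uniq (VL N).
Proof.
rewrite cat_uniq; apply/and3P; split.
- rewrite map_inj_uniq ?enum_uniq //; by move=> x y [].
- apply/hasPn => v /allpairsP [[x y] /= [_ _ ->]]; by apply/mapP => -[z _].
- apply: allpairs_uniq; [exact: enum_uniq | exact: uniq_mis | ].
  by move=> [x y] [x' y'] _ _ /= [-> ->].
Qed.
End Vars.

Open Scope R_scope.

Lemma sumR_add {T : Type} (s : seq T) F G : sumR s (fun x => F x + G x) = sumR s F + sumR s G.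
Proof. elim: s => [|x s IH] /=; [ring | rewrite IH; ring]. Qed.
Lemma sumR_mull {T : Type} (s : seq T) c F : c * sumR s F = sumR s (fun x => c * F x).
Proof. elim: s => [|x s IH] /=; [ring | rewrite -IH; ring]. Qed.
Lemma sumR_ext {T : eqType} (s : seq T) F G : (forall x, x \in s -> F x = G x) -> sumR s F = sumR s G.
Proof.
elim: s => [|x s IH] H //=; rewrite H ?inE ?eqxx // IH // => y hy; apply: H; by rewrite inE hy orbT.
Qed.
Lemma sumR_ext' {T : Type} (s : seq T) F G : (forall x, F x = G x) -> sumR s F = sumR s G.
Proof. elim: s => [|x s IH] H //=; by rewrite H IH. Qed.
Lemma sumR_exchange {T U : Type} (s : seq T) (t : seq U) F :
  sumR s (fun x => sumR t (fun y => F x y)) = sumR t (fun y => sumR s (fun x => F x y)).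
Proof.
elim: s => [|x s IH] /=.
  elim: t => [|y t IH] /=; [done | rewrite -IH; ring].
rewrite IH -sumR_add //.
Qed.
Lemma sumR_zero {T : Type} (s : seq T) : sumR s (fun _ => 0) = 0.
Proof. elim: s => [|x s IH] /=; [done | rewrite IH; ring]. Qed.
Lemma sumR_ind {T : eqType} (s : seq T) (x : T) F : uniq s ->
  sumR s (fun y => F y * (if y == x then 1 else 0)) = if x \in s then F x else 0.
Proof.
elim: s => [|y s IH] //= /andP [ys us]; rewrite IH // inE.
case: (y =P x) => [E|ne] /=.
  subst y; rewrite (negbTE ys) eqxx /=; ring.
have -> : (x == y) = false by apply/eqP => E; apply: ne.
rewrite Rmult_0_r Rplus_0_l; done.
Qed.

Lemma derivable_sum {T : Type} (s : seq T) (F F' : T -> R -> R) x :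
  (forall y, derivable_pt_lim (F y) x (F' y x)) ->
  derivable_pt_lim (fun t => sumR s (fun y => F y t)) x (sumR s (fun y => F' y x)).
Proof.
move=> H; elim: s => [|y s IH] /=; first exact: derivable_pt_lim_const.
exact: derivable_pt_lim_plus (H y) IH.
Qed.

Lemma Derive_Dlim (g : R -> R) x l : derivable_pt_lim g x l -> Derive g x = l.
Proof. move=> H; apply: is_derive_unique; exact/is_derive_Reals. Qed.

Section D.
Variables (m : nat) (Aset : finType).
Local Notation Pt := (Point m Aset).
Local Notation V := (Var m Aset).
Implicit Types (f g : Pt -> R) (p : Pt) (u v w : V).

Lemma upd_comm p u v x y : u != v -> upd (upd p u x) v y = upd (upd p v y) u x.
Proof.
move=> ne; apply: functional_extensionality => w; rewrite /upd.
case: (w =P v) => Ev; case: (w =P u) => Eu //=.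
by move: ne; rewrite -Ev -Eu eqxx.
Qed.

Lemma HP_add u f g f' g' : HasPartial u f f' -> HasPartial u g g' -> HasPartial u (fun p => f p + g p) (fun p => f' p + g' p).
Proof. move=> Hf Hg p; exact: derivable_pt_lim_plus (Hf p) (Hg p). Qed.
Lemma HP_mul u f g f' g' : HasPartial u f f' -> HasPartial u g g' -> HasPartial u (fun p => f p * g p) (fun p => f' p * g p + f p * g' p).
Proof.
move=> Hf Hg p; have := derivable_pt_lim_mult (fun t => f (upd p u t)) (fun t => g (upd p u t)) _ _ _ (Hf p) (Hg p).
by rewrite upd_same.
Qed.
Lemma HP_const u c : HasPartial u (fun _ => c) (fun _ => 0).
Proof. move=> p; exact: derivable_pt_lim_const. Qed.
Lemma HP_coord u w : HasPartial u (fun p => p w) (fun _ => if w == u then 1 else 0).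
Proof.
move=> p; rewrite /upd; case: eqP => [E|_] /=.
  exact: derivable_pt_lim_id.
exact: derivable_pt_lim_const.
Qed.
Lemma HP_sum {T : Type} u (s : seq T) (F F' : T -> Pt -> R) :
  (forall y, HasPartial u (F y) (F' y)) -> HasPartial u (fun p => sumR s (fun y => F y p)) (fun p => sumR s (fun y => F' y p)).
Proof.
move=> H p.
have H' : forall y, derivable_pt_lim (fun t => F y (upd p u t)) (p u) ((fun y t => F' y (upd p u t)) y (p u)).
  by move=> y /=; rewrite upd_same; exact: H.
have := @derivable_sum _ s (fun y t => F y (upd p u t)) (fun y t => F' y (upd p u t)) (p u) H'. by rewrite /= upd_same.
Qed.

Lemma Sm_deriv n f v q s : Sm n f -> derivable_pt_lim (fun t => f (upd q v t)) s (Pd v f (upd q v s)).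
Proof.
move=> Hf; have [HP _] := Sm_partial v Hf.
have H := HP (upd q v s); cbv beta in H.
have E : (fun t => f (upd (upd q v s) v t)) = (fun t => f (upd q v t)).
  by apply: functional_extensionality => t; rewrite upd_upd.
by rewrite E upd_eq in H.
Qed.

Lemma schwarz n f u v : Sm n f -> forall p, Pd u (Pd v f) p = Pd v (Pd u f) p.
Proof.
move=> Hf p.
case: (u =P v) => [->//|/eqP ne].
have [_ Sv] := Sm_partial v Hf. have [_ Su] := Sm_partial u Hf.
have [_ Suv] := Sm_partial u Sv. have [_ Svu] := Sm_partial v Su.
set F := fun x y => f (upd (upd p u x) v y).
have Ha : forall x y, derivable_pt_lim (fun t => F x t) y (Pd v f (upd (upd p u x) v y)).
  move=> x y; rewrite /F; exact: (Sm_deriv v (upd p u x) y Hf).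
have Hb : forall x y, derivable_pt_lim (fun t => F t y) x (Pd u f (upd (upd p u x) v y)).
  move=> x y; rewrite /F upd_comm //.
  have -> : (fun t => f (upd (upd p u t) v y)) = (fun t => f (upd (upd p v y) u t)).
    by apply: functional_extensionality => t; rewrite upd_comm.
  exact: (Sm_deriv u (upd p v y) x Hf).
have Hc : forall y, (fun z => Derive (fun t => F z t) y) = (fun z => Pd v f (upd (upd p u z) v y)).
  move=> y; apply: functional_extensionality => z; exact: Derive_Dlim.
have Hd : forall x, (fun z => Derive (fun t => F t z) x) = (fun z => Pd u f (upd (upd p u x) v z)).
  move=> x; apply: functional_extensionality => z; exact: Derive_Dlim.
have He : forall x y, derivable_pt_lim (fun z => Pd v f (upd (upd p u z) v y)) x (Pd u (Pd v f) (upd (upd p u x) v y)).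
  move=> x y; rewrite upd_comm //.
  have -> : (fun z => Pd v f (upd (upd p u z) v y)) = (fun z => Pd v f (upd (upd p v y) u z)).
    by apply: functional_extensionality => t; rewrite upd_comm.
  exact: (Sm_deriv u (upd p v y) x Sv).
have Hf' : forall x y, derivable_pt_lim (fun z => Pd u f (upd (upd p u x) v z)) y (Pd v (Pd u f) (upd (upd p u x) v y)).
  move=> x y; exact: (Sm_deriv v (upd p u x) y Su).
have E1 : (fun x y => Derive (fun z => Derive (fun t => F z t) y) x) = (fun x y => Pd u (Pd v f) (upd (upd p u x) v y)).
  apply: functional_extensionality => x; apply: functional_extensionality => y.
  rewrite Hc; exact: Derive_Dlim.
have E2 : (fun x y => Derive (fun z => Derive (fun t => F t z) x) y) = (fun x y => Pd v (Pd u f) (upd (upd p u x) v y)).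
  apply: functional_extensionality => x; apply: functional_extensionality => y.
  rewrite Hd; exact: Derive_Dlim.
have Hcont : forall G, Sm n G -> continuity_2d_pt (fun x y => G (upd (upd p u x) v y)) (p u) (p v).
  move=> G [_ CG] eps.
  have HC : cont_upto n G := Ck_cont (CG 0%N).
  have [d [Hd0 Hd0']] := HC p eps (cond_pos eps).
  exists (mkposreal d Hd0) => x y /= Hx Hy.
  rewrite upd_same upd_same. apply: Hd0' => w _.
  rewrite /upd; case: (w =P v) => [->//|_]; case: (w =P u) => [->//|_].
  by rewrite Rminus_diag Rabs_R0.
have S := Schwarz F (p u) (p v).
have := congr1 (fun G => G (p u) (p v)) E1. have := congr1 (fun G => G (p u) (p v)) E2.
rewrite /= !upd_same => <- <-.
apply: S.
- exists (mkposreal 1 Rlt_0_1) => x y _ _; split; [|split; [|split]].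
  + eexists; apply/is_derive_Reals; exact: Hb.
  + eexists; apply/is_derive_Reals; exact: Ha.
  + rewrite Hc; eexists; apply/is_derive_Reals; exact: He.
  + rewrite Hd; eexists; apply/is_derive_Reals; exact: Hf'.
- rewrite E1; exact: Hcont.
- rewrite E2; exact: Hcont.
Qed.

End D.

Open Scope R_scope.

Section DR.
Variables (m : nat) (Aset : finType).
Local Notation Pt := (Point m Aset).
Local Notation V := (Var m Aset).
Implicit Types (f g : Pt -> R) (p : Pt) (u v w : V).

Definition DR (mu : 'I_m) f : Pt -> R := fun p => Dlim (fun t => f (fun v => p v + t * wvec mu p v)) 0.

Lemma DR_deriv n N f mu : Sm n f -> (n <= N)%N -> forall p,
  derivable_pt_lim (fun t => f (fun v => p v + t * wvec mu p v)) 0 (sumR (VL m Aset N) (fun v => wvec mu p v * Pd v f p)).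
Proof.
move=> Hf HN p.
have HP : forall v, HasPartial v f (Pd v f) /\ cont_upto n (Pd v f).
  move=> v; have [H1 [_ H2]] := Sm_partial v Hf; split => //; exact: Ck_cont (H2 0%N).
have := chain_shL (wvec mu p) HP (uniq_VL m Aset N) p.
have -> : (fun t => f (shL (VL m Aset N) p t (wvec mu p))) = (fun t => f (fun v => p v + t * wvec mu p v)) => //.
apply: functional_extensionality => t; apply: (proj1 Hf) => v hv.
by rewrite /shL mem_VL (leq_trans hv HN).
Qed.

Lemma DR_eq n N f mu : Sm n f -> (n <= N)%N ->
  DR mu f = fun p => sumR (VL m Aset N) (fun v => wvec mu p v * Pd v f p).
Proof.
move=> Hf HN; apply: functional_extensionality => p; apply: Dlim_eq; exact: (@DR_deriv n N f mu Hf HN p).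
Qed.

Lemma Sm_W n mu v : (ord v <= n)%N -> Sm n.+1 (fun p => wvec mu p v).
Proof.
case: v => [nu|[a i]] /= H.
  exact: Sm_const.
apply: (Sm_coord (w := inr (a, mshift mu i))); by rewrite /= mabs_shift ltnS.
Qed.

Lemma Sm_DR n f mu : Sm n f -> Sm n.+1 (DR mu f).
Proof.
move=> Hf; rewrite (DR_eq mu Hf (leqnn n)).
apply: Sm_sum => v; rewrite mem_VL => hv.
apply: Sm_mul; first exact: Sm_W.
apply: (Sm_mono (leqnSn n)); exact: (proj2 (Sm_partial v Hf)).
Qed.

Definition dW (mu : 'I_m) v u : R :=
  match v with inl _ => 0 | inr (a, i) => if (inr (a, mshift mu i) : V) == u then 1 else 0 end.

Lemma HP_W mu v u : HasPartial u (fun p => wvec mu p v) (fun _ => dW mu v u).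
Proof.
case: v => [nu|[a i]] /=; first exact: HP_const.
exact: (HP_coord u (inr (a, mshift mu i))).
Qed.

Definition Kc (mu nu : 'I_m) p v : R :=
  match v with inl _ => 0 | inr (a, i) => p (inr (a, mshift nu (mshift mu i))) end.

Lemma DR_DR n f mu nu : Sm n f -> forall p,
  DR nu (DR mu f) p =
  sumR (VL m Aset n.+1) (fun v => Kc mu nu p v * Pd v f p) +
  sumR (VL m Aset n.+1) (fun u => sumR (VL m Aset n.+1) (fun v => wvec nu p u * wvec mu p v * Pd u (Pd v f) p)).
Proof.
move=> Hf p.
set L := VL m Aset n.+1.
have Sg := Sm_DR mu Hf.
rewrite (DR_eq nu Sg (leqnn n.+1)).
have Eg := DR_eq mu Hf (leqnSn n).
have Pg : forall u, Pd u (DR mu f) = fun p => sumR L (fun v => dW mu v u * Pd v f p + wvec mu p v * Pd u (Pd v f) p).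
  move=> u; apply: HasPartial_Pd; rewrite Eg.
  apply: HP_sum => v. apply: HP_mul; first exact: HP_W.
  exact: (proj1 (Sm_partial u (proj2 (Sm_partial v Hf)))).
have Hu : forall u, wvec nu p u * Pd u (DR mu f) p = sumR L (fun v => wvec nu p u * dW mu v u * Pd v f p) + sumR L (fun v => wvec nu p u * wvec mu p v * Pd u (Pd v f) p).
  move=> u; rewrite Pg /= sumR_mull -sumR_add; apply: sumR_ext' => v; ring.
rewrite (sumR_ext' L Hu) sumR_add; congr (_ + _).
rewrite sumR_exchange; apply: sumR_ext => v hv.
case: (leqP (ord v) n) => hvn; last first.
  rewrite (Pd_high (proj1 Hf) hvn p) Rmult_0_r.
  transitivity (sumR L (fun _ => 0)); [apply: sumR_ext' => u; ring | exact: sumR_zero].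
case: v hv hvn => [nu'|[a i]] hv hvn /=.
  rewrite Rmult_0_l; transitivity (sumR L (fun _ => 0)); [apply: sumR_ext' => u; ring | exact: sumR_zero].
have -> : sumR L (fun u => wvec nu p u * (if (inr (a, mshift mu i) : V) == u then 1 else 0) * Pd (inr (a, i)) f p)
  = sumR L (fun u => wvec nu p u * (if u == (inr (a, mshift mu i) : V) then 1 else 0)) * Pd (inr (a, i)) f p.
  rewrite Rmult_comm sumR_mull; apply: sumR_ext' => u; rewrite eq_sym; ring.
rewrite sumR_ind ?uniq_VL // mem_VL /= mabs_shift ltnS hvn /=.
done.
Qed.

Lemma DR_comm n f mu nu : Sm n f -> DR nu (DR mu f) = DR mu (DR nu f).
Proof.
move=> Hf; apply: functional_extensionality => p.
rewrite (DR_DR mu nu Hf) (DR_DR nu mu Hf); congr (_ + _).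
  apply: sumR_ext' => v; case: v => [x|[a i]] //=; by rewrite mshiftC.
rewrite sumR_exchange; apply: sumR_ext' => u; apply: sumR_ext' => v.
rewrite (schwarz _ _ Hf); ring.
Qed.

End DR.

Open Scope R_scope.

Section Fn.
Variables (m : nat) (Aset : finType) (cplx : bool).
Local Notation Pt := (Point m Aset).
Local Notation V := (Var m Aset).
Local Notation Fn := (Fn m Aset).
Implicit Types (f g : Pt -> R) (p : Pt) (u v w : V) (F G : Fn).

Definition re F : Pt -> R := fun p => fst (F p).
Definition im F : Pt -> R := fun p => snd (F p).
Definition scalF (c : R) F : Fn := fun p => (c * fst (F p), c * snd (F p)).

Lemma Dtot_DR mu F : Dtot mu F = fun p => (DR mu (re F) p, DR mu (im F) p).
Proof. by []. Qed.

Lemma inA_iff F : inA cplx F <-> exists n, Sm n (re F) /\ Sm n (im F) /\ (cplx = false -> forall p, im F p = 0).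
Proof. by []. Qed.

Lemma Fn_ext F G : (forall p, F p = G p) -> F = G.
Proof. exact: functional_extensionality. Qed.

Lemma DR_const mu c : DR mu (fun _ : Pt => c) = fun _ => 0.
Proof. apply: functional_extensionality => p; exact: Dlim_const. Qed.

Lemma inA_Dtot mu F : inA cplx F -> inA cplx (Dtot mu F).
Proof.
move=> [n [Hr [Hi H0]]]; exists n.+1; split; [|split].
- exact: (Sm_DR mu Hr).
- exact: (Sm_DR mu Hi).
- move=> Hc p.
  have E : im F = fun _ => 0 by apply: functional_extensionality => q; exact: H0.
  change (DR mu (im F) p = 0). by rewrite E DR_const.
Qed.

Lemma Dtot_comm mu nu F : inA cplx F -> Dtot nu (Dtot mu F) = Dtot mu (Dtot nu F).
Proof.
move=> [n [Hr [Hi _]]]; rewrite !Dtot_DR.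
have -> : re (fun p => (DR mu (re F) p, DR mu (im F) p)) = DR mu (re F) by [].
have -> : im (fun p => (DR mu (re F) p, DR mu (im F) p)) = DR mu (im F) by [].
have -> : re (fun p => (DR nu (re F) p, DR nu (im F) p)) = DR nu (re F) by [].
have -> : im (fun p => (DR nu (re F) p, DR nu (im F) p)) = DR nu (im F) by [].
by rewrite (DR_comm mu nu Hr) (DR_comm mu nu Hi).
Qed.

Lemma Sm_max n n' f g : Sm n f -> Sm n' g -> Sm (maxn n n') f /\ Sm (maxn n n') g.
Proof. move=> Hf Hg; split; [apply: Sm_mono Hf; exact: leq_maxl | apply: Sm_mono Hg; exact: leq_maxr]. Qed.

Lemma DR_add mu n f g : Sm n f -> Sm n g -> forall p, DR mu (fun q => f q + g q) p = DR mu f p + DR mu g p.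
Proof.
move=> Hf Hg p; rewrite /DR.
rewrite (Dlim_eq (DR_deriv mu Hf (leqnn n) p)) (Dlim_eq (DR_deriv mu Hg (leqnn n) p)).
apply: Dlim_eq; exact: derivable_pt_lim_plus (DR_deriv mu Hf (leqnn n) p) (DR_deriv mu Hg (leqnn n) p).
Qed.

Lemma DR_scal mu n c f : Sm n f -> forall p, DR mu (fun q => c * f q) p = c * DR mu f p.
Proof.
move=> Hf p; rewrite /DR.
rewrite (Dlim_eq (DR_deriv mu Hf (leqnn n) p)).
apply: Dlim_eq; exact: derivable_pt_lim_scal (DR_deriv mu Hf (leqnn n) p).
Qed.

Lemma inA_add F G : inA cplx F -> inA cplx G -> inA cplx (addF F G).
Proof.
move=> [n [Hr [Hi H0]]] [n' [Hr' [Hi' H0']]].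
have [Hr1 Hr2] := Sm_max Hr Hr'. have [Hi1 Hi2] := Sm_max Hi Hi'.
exists (maxn n n'); split; [|split].
- exact: Sm_add Hr1 Hr2.
- exact: Sm_add Hi1 Hi2.
- move=> Hc p; rewrite /im /addF /=. have := H0 Hc p; have := H0' Hc p; rewrite /im; lra.
Qed.

Lemma inA_scal c F : inA cplx F -> inA cplx (scalF c F).
Proof.
move=> [n [Hr [Hi H0]]]; exists n; split; [|split].
- apply: Sm_mul Hr; exact: Sm_const.
- apply: Sm_mul Hi; exact: Sm_const.
- move=> Hc p; rewrite /im /scalF /=. have := H0 Hc p; rewrite /im => ->; ring.
Qed.

Lemma inA_zero : inA cplx (@zeroF m Aset).
Proof. exists 0%N; split; [|split]; try exact: Sm_const; by []. Qed.

Lemma inA_nmul k F : inA cplx F -> inA cplx (nmulF k F).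
Proof. exact: inA_scal. Qed.

Lemma inA_sub F G : inA cplx F -> inA cplx G -> inA cplx (subF F G).
Proof.
move=> HF HG; have := inA_add HF (inA_scal (-1) HG).
have -> // : addF F (scalF (-1) G) = subF F G.
apply: Fn_ext => p; rewrite /addF /scalF /subF /=; congr pair; ring.
Qed.

Lemma Dtot_add mu F G : inA cplx F -> inA cplx G -> forall p, Dtot mu (addF F G) p = addF (Dtot mu F) (Dtot mu G) p.
Proof.
move=> [n [Hr [Hi _]]] [n' [Hr' [Hi' _]]].
have [Hr1 Hr2] := Sm_max Hr Hr'. have [Hi1 Hi2] := Sm_max Hi Hi'.
move=> p; rewrite !Dtot_DR /addF /=; congr pair.
- exact: (DR_add mu Hr1 Hr2 p).
- exact: (DR_add mu Hi1 Hi2 p).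
Qed.

Lemma Dtot_scal mu c F : inA cplx F -> forall p, Dtot mu (scalF c F) p = scalF c (Dtot mu F) p.
Proof.
move=> [n [Hr [Hi _]]] p; rewrite !Dtot_DR /scalF /=; congr pair.
- exact: (DR_scal mu c Hr p).
- exact: (DR_scal mu c Hi p).
Qed.

Lemma Dtot_zero mu p : Dtot mu (@zeroF m Aset) p = (0, 0).
Proof. change ((DR mu (fun _ => 0) p, DR mu (fun _ => 0) p) = (0, 0)); by rewrite DR_const. Qed.

Lemma Dtot_ext mu F G : (forall p, F p = G p) -> Dtot mu F = Dtot mu G.
Proof. by move=> H; rewrite (Fn_ext H). Qed.

Lemma inA_iter mu k F : inA cplx F -> inA cplx (iter k (Dtot mu) F).
Proof. elim: k => [|k IH] H //=; apply: inA_Dtot; exact: IH. Qed.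

Lemma Dtot_iter mu nu k F : inA cplx F -> Dtot mu (iter k (Dtot nu) F) = iter k (Dtot nu) (Dtot mu F).
Proof.
elim: k => [|k IH] H //=. rewrite -IH //. apply: Dtot_comm. exact: inA_iter.
Qed.

Definition DL (s : seq 'I_m) (j : MI m) F : Fn := foldr (fun mu (G : Fn) => iter (j mu) (Dtot mu) G) F s.

Lemma inA_DL s j F : inA cplx F -> inA cplx (DL s j F).
Proof. elim: s => [|x s IH] H //=; apply: inA_iter; exact: IH. Qed.

Lemma DL_notin s j mu F : mu \notin s -> DL s (mshift mu j) F = DL s j F.
Proof.
elim: s => [|x s IH] //=; rewrite inE negb_or => /andP [ne ns].
rewrite IH // ffunE; by rewrite eq_sym (negbTE ne) addn0.
Qed.

Lemma Dtot_DL s j mu F : uniq s -> mu \in s -> inA cplx F -> Dtot mu (DL s j F) = DL s (mshift mu j) F.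
Proof.
elim: s => [|x s IH] //= /andP [xs us]; rewrite inE => /orP [/eqP E|ms] HF.
  subst x. rewrite ffunE eqxx addn1 /= DL_notin //.
rewrite Dtot_iter; last exact: inA_DL.
rewrite IH // ffunE.
have -> : (x == mu) = false by apply/eqP => E; subst x; rewrite ms in xs.
by rewrite addn0.
Qed.

Lemma Dj_DL (j : MI m) F : Dj j F = DL (enum 'I_m) j F.
Proof. by []. Qed.

Lemma inA_Dj j F : inA cplx F -> inA cplx (Dj j F).
Proof. exact: inA_DL. Qed.

Lemma Dtot_Dj mu j F : inA cplx F -> Dtot mu (Dj j F) = Dj (mshift mu j) F.
Proof. move=> H; rewrite !Dj_DL Dtot_DL ?enum_uniq ?mem_enum //. Qed.

Lemma Dj_0 F : Dj [ffun _ => 0%N] F = F.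
Proof.
rewrite Dj_DL; elim: (enum 'I_m) => [|x s IH] //=; by rewrite ffunE /= IH.
Qed.

End Fn.

Close Scope R_scope.

Section MI2.
Variable m : nat.
Local Notation MI := (MI m).
Implicit Types (i j k : MI) (mu nu : 'I_m).

Definition mdec mu k : MI := [ffun nu => k nu - (nu == mu)].

Lemma mleP k i : reflect (forall mu, k mu <= i mu) (mle k i).
Proof. exact: forallP. Qed.

Lemma mle_refl i : mle i i.
Proof. by apply/mleP. Qed.

Lemma mle_shift k i mu : mle k i -> mle k (mshift mu i).
Proof. move/mleP=> H; apply/mleP => nu; rewrite ffunE; exact: leq_trans (H nu) (leq_addr _ _). Qed.

Lemma msub_shift k i mu : mle k i -> msub (mshift mu i) k = mshift mu (msub i k).
Proof. move/mleP=> H; apply/ffunP => nu; rewrite !ffunE; have := H nu; lia. Qed.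

Lemma msub_dec k i mu : 0 < k mu -> mle k (mshift mu i) -> msub i (mdec mu k) = msub (mshift mu i) k.
Proof.
move=> Hk /mleP H; apply/ffunP => nu; rewrite !ffunE.
have := H nu; rewrite ffunE.
case: (nu =P mu) => [->|_] /=; lia.
Qed.

Lemma mle_dec k i mu : mle (mdec mu k) i = mle k (mshift mu i).
Proof.
apply/mleP/mleP => H nu; have := H nu; rewrite !ffunE;
case: (nu =P mu) => _ /=; lia.
Qed.

Lemma mle_shift0 k i mu : k mu = 0 -> mle k (mshift mu i) = mle k i.
Proof.
move=> Hk; apply/mleP/mleP => H nu; have := H nu; rewrite ?ffunE;
case: (nu =P mu) => [->|_] /=; lia.
Qed.

Lemma mbinom_small k i : ~~ mle k i -> mbinom i k = 0.
Proof.
move=> H; have [nu Hnu] : exists nu, i nu < k nu.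
  apply/existsP; move: H; apply: contraR; rewrite negb_exists => /forallP H.
  apply/mleP => nu; have := H nu; by rewrite -leqNgt.
rewrite /mbinom (bigD1 nu) //= bin_small //.
Qed.

Lemma mbinom_pascal k i mu : 0 < k mu -> mbinom (mshift mu i) k = mbinom i k + mbinom i (mdec mu k).
Proof.
move=> Hk; rewrite /mbinom (bigD1 mu) //= [X in _ = X + _](bigD1 mu) //= [X in _ = _ + X](bigD1 mu) //=.
rewrite !ffunE eqxx addn1.
have E1 : \prod_(nu < m | nu != mu) 'C(mshift mu i nu, k nu) = \prod_(nu < m | nu != mu) 'C(i nu, k nu).
  apply: eq_bigr => nu /negbTE ne; by rewrite ffunE ne addn0.
have E2 : \prod_(nu < m | nu != mu) 'C(i nu, mdec mu k nu) = \prod_(nu < m | nu != mu) 'C(i nu, k nu).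
  apply: eq_bigr => nu /negbTE ne; by rewrite ffunE ne subn0.
rewrite E1 E2 -mulnDl; congr (_ * _).
case: (k mu) Hk => [//|k'] _; by rewrite binS subn1.
Qed.

Lemma mbinom_shift0 k i mu : k mu = 0 -> mbinom (mshift mu i) k = mbinom i k.
Proof.
move=> Hk; rewrite /mbinom; apply: eq_bigr => nu _; rewrite ffunE.
case: (nu =P mu) => [->|_] /=; last by rewrite addn0.
by rewrite Hk !bin0.
Qed.

Lemma mabs_dec k mu : 0 < k mu -> mabs k = (mabs (mdec mu k)).+1.
Proof.
move=> Hk; rewrite /mabs (bigD1 mu) //= [in RHS](bigD1 mu) //= ffunE eqxx.
have -> : \sum_(nu < m | nu != mu) mdec mu k nu = \sum_(nu < m | nu != mu) k nu.
  apply: eq_bigr => nu /negbTE ne; by rewrite ffunE ne subn0.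
rewrite -addSn; congr (_ + _); lia.
Qed.

Lemma mzero_abs k : mabs k = 0 -> k = [ffun _ => 0].
Proof.
move=> H; apply/ffunP => mu; rewrite ffunE; have := mabs_ge k mu; rewrite H leqn0; by move/eqP.
Qed.

Lemma msub_self i : msub i i = [ffun _ => 0].
Proof. apply/ffunP => mu; by rewrite !ffunE subnn. Qed.

Lemma mbinom_self i : mbinom i i = 1.
Proof. rewrite /mbinom; apply: big1 => mu _; exact: binn. Qed.

Lemma mle_abs k i : mle k i -> mabs k <= mabs i.
Proof. move/mleP=> H; rewrite /mabs; apply: leq_sum => mu _; exact: H. Qed.

Lemma mle_abs_eq k i : mle k i -> mabs k = mabs i -> k = i.
Proof.
move/mleP=> H E; apply/ffunP => mu; apply/eqP; rewrite eqn_leq H /=.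
move: E; rewrite /mabs (bigD1 mu) //= [in X in _ = X](bigD1 mu) //= => E.
have Hab : \sum_(nu < m | nu != mu) k nu <= \sum_(nu < m | nu != mu) i nu by apply: leq_sum => nu _; exact: H.
by rewrite -(leq_add2r (\sum_(nu < m | nu != mu) k nu)) E leq_add2l.
Qed.

End MI2.

Open Scope R_scope.

Section E.
Variables (m : nat) (Aset : finType) (cplx : bool).
Local Notation Pt := (Point m Aset).
Local Notation Fn := (Fn m Aset).
Local Notation VF := (VF m Aset).
Local Notation MI := (MI m).
Implicit Types (z w : VF) (F G : Fn).

Definition addV z w : VF := fun a i => addF (z a i) (w a i).
Definition scalV c z : VF := fun a i => scalF c (z a i).
Definition zeroV : VF := fun _ _ => @zeroF m Aset.

Lemma VF_ext z w : (forall a i p, z a i p = w a i p) -> z = w.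
Proof.
move=> H; apply: functional_extensionality => a; apply: functional_extensionality => i;
apply: functional_extensionality => p; exact: H.
Qed.

Lemma E_zero q : Eshift cplx q zeroV.
Proof.
elim: q => [|q IH] //=; split; first by move=> a i; exact: inA_zero.
move=> mu; suff -> : commD mu zeroV = zeroV by [].
apply: VF_ext => a i p; rewrite /commD /subF Dtot_zero /zeroV /zeroF /=; congr pair; ring.
Qed.

Lemma E_add q z w : Eshift cplx q z -> Eshift cplx q w -> Eshift cplx q (addV z w).
Proof.
elim: q z w => [|q IH] z w /=.
  move=> Hz Hw a i p; rewrite /addV /addF Hz Hw /=; congr pair; ring.
move=> [Iz Hz] [Iw Hw]; split; first by move=> a i; apply: inA_add.
move=> mu; suff -> : commD mu (addV z w) = addV (commD mu z) (commD mu w) by apply: IH.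
apply: VF_ext => a i p; rewrite /commD /addV /subF (Dtot_add mu (Iz a i) (Iw a i)) /addF /=.
congr pair; ring.
Qed.

Lemma E_scal q c z : Eshift cplx q z -> Eshift cplx q (scalV c z).
Proof.
elim: q z => [|q IH] z /=.
  move=> Hz a i p; rewrite /scalV /scalF Hz /=; congr pair; ring.
move=> [Iz Hz]; split; first by move=> a i; apply: inA_scal.
move=> mu; suff -> : commD mu (scalV c z) = scalV c (commD mu z) by apply: IH.
apply: VF_ext => a i p; rewrite /commD /scalV /subF (Dtot_scal mu c (Iz a i)) /scalF /=.
congr pair; ring.
Qed.

Lemma E_mono q z : Eshift cplx q z -> Eshift cplx q.+1 z.
Proof.
elim: q z => [|q IH] z /=.
  move=> Hz. have -> : z = zeroV by apply: VF_ext => a i p; rewrite Hz.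
  exact: (E_zero 1).
move=> [Iz Hz]; split => // mu; exact: IH.
Qed.

Lemma E_le q q' z : (q <= q')%N -> Eshift cplx q z -> Eshift cplx q' z.
Proof.
move=> H; elim: q' H => [|q' IH]; first by rewrite leqn0 => /eqP ->.
rewrite leq_eqVlt => /orP [/eqP -> //|H] Hz; apply: E_mono; exact: IH.
Qed.

End E.

Open Scope R_scope.

Section Eps.
Variables (m : nat) (Aset : finType) (cplx : bool).
Local Notation Pt := (Point m Aset).
Local Notation Fn := (Fn m Aset).
Local Notation VF := (VF m Aset).
Local Notation MI := (MI m).
Implicit Types (z w : VF) (F G : Fn) (phi : Aset -> Fn).

Lemma INR_addn (a b : nat) : INR (a + b)%N = INR a + INR b.
Proof. by rewrite -plus_INR. Qed.

Lemma commD_eps phi k mu : (forall a, inA cplx (phi a)) ->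
  commD mu (eps k phi) = if (0 < k mu)%N then scalV (-1) (eps (mdec mu k) phi) else @zeroV m Aset.
Proof.
move=> Hphi; apply: VF_ext => a i p.
rewrite /commD /eps.
case: (boolP (mle k i)) => Hki.
  rewrite (mle_shift mu Hki).
  change (nmulF (mbinom i k) (Dj (msub i k) (phi a))) with (scalF (INR (mbinom i k)) (Dj (msub i k) (phi a))).
  rewrite /subF (Dtot_scal mu _ (inA_Dj (msub i k) (Hphi a))) (Dtot_Dj mu (msub i k) (Hphi a)) -(msub_shift mu Hki).
  set X := Dj (msub (mshift mu i) k) (phi a).
  case: (ltnP 0 (k mu)) => Hk.
    rewrite /scalV mle_dec (mle_shift mu Hki) (msub_dec Hk (mle_shift mu Hki)) -/X (mbinom_pascal i Hk).
    rewrite /scalF /nmulF /= INR_addn; congr pair; ring.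
  have Hk0 : k mu = 0%N by apply/eqP; rewrite -leqn0.
  rewrite (mbinom_shift0 i Hk0) /zeroV /zeroF /scalF /nmulF /=; congr pair; ring.
case: (boolP (mle k (mshift mu i))) => Hki'.
  have Hk : (0 < k mu)%N.
    rewrite lt0n; apply/negP => /eqP Hk0; by rewrite (mle_shift0 i Hk0) (negbTE Hki) in Hki'.
  rewrite Hk /scalV mle_dec Hki' (msub_dec Hk Hki') (mbinom_pascal i Hk) (mbinom_small Hki) add0n.
  rewrite /subF Dtot_zero /scalF /nmulF /=; congr pair; ring.
rewrite /subF Dtot_zero /zeroF.
case: (ltnP 0 (k mu)) => Hk.
  rewrite /scalV mle_dec (negbTE Hki') /scalF /zeroF /=; congr pair; ring.
rewrite /zeroV /zeroF /=; congr pair; ring.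
Qed.

Lemma inDV_eps k phi : (forall a, inA cplx (phi a)) -> inDV cplx (eps k phi).
Proof.
move=> H a i; rewrite /eps; case: ifP => _; last exact: inA_zero.
apply: inA_nmul; exact: inA_Dj.
Qed.

Lemma E_eps phi : (forall a, inA cplx (phi a)) -> forall s k, mabs k = s -> Eshift cplx s.+1 (eps k phi).
Proof.
move=> Hphi; elim=> [|s IH] k Hs; split; try exact: inDV_eps.
- move=> mu a i p; rewrite commD_eps //.
  have -> : (0 < k mu)%N = false by have := mabs_ge k mu; rewrite Hs leqn0 lt0n => ->.
  by [].
- move=> mu; rewrite commD_eps //; case: ifP => Hk; last exact: (E_zero m Aset cplx s.+1).
  apply: (E_scal (q := s.+1)); apply: IH. have := mabs_dec Hk; rewrite Hs; by case.
Qed.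

Lemma E_sum_eps q (phi : MI -> Aset -> Fn) (s : seq MI) :
  (forall k, k \in s -> (mabs k <= q)%N /\ forall a, inA cplx (phi k a)) ->
  Eshift cplx q.+1 (fun a i => sumF [seq eps k (phi k) a i | k <- s]).
Proof.
elim: s => [|k s IH] H; first exact: (E_zero m Aset cplx q.+1).
have [Hk Hk'] := H k (mem_head _ _).
apply: (E_add (z := eps k (phi k)) (w := fun a i => sumF [seq eps k (phi k) a i | k <- s])).
  apply: (E_le (q := (mabs k).+1)); first by rewrite ltnS.
  exact: E_eps.
apply: IH => l hl; apply: H; by rewrite inE hl orbT.
Qed.

Lemma E_sumEps q (phi : MI -> Aset -> Fn) :
  (forall k a, (mabs k <= q)%N -> inA cplx (phi k a)) -> Ecal cplx q (sumEps q phi).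
Proof.
move=> H; apply: E_sum_eps => k; rewrite mem_mis => hk; split => // a; exact: H.
Qed.

End Eps.

Open Scope R_scope.

Section Sums.
Variables (m : nat) (Aset : finType) (cplx : bool).
Local Notation Pt := (Point m Aset).
Local Notation Fn := (Fn m Aset).
Local Notation VF := (VF m Aset).
Local Notation MI := (MI m).

Lemma sumF_split (s : seq MI) (F : MI -> Fn) x p : uniq s -> x \in s ->
  sumF [seq F l | l <- s] p = addF (F x) (sumF [seq F l | l <- [seq l <- s | l != x]]) p.
Proof.
elim: s => [|y s IH] //= /andP [ys us]; rewrite inE => /orP [/eqP E|xs].
  subst y; rewrite eqxx /=.
  have -> : [seq l <- s | l != x] = s.
    rewrite -[RHS]filter_predT; apply: eq_in_filter => l hl /=; apply/eqP => E; subst l; by rewrite hl in ys.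
  by [].
have -> : (y != x) = true by apply/eqP => E; subst y; rewrite xs in ys.
rewrite /= /addF IH //= /addF; congr pair; ring.
Qed.

Lemma sumF_ext_in (s : seq MI) (F G : MI -> Fn) p : (forall l, l \in s -> F l p = G l p) ->
  sumF [seq F l | l <- s] p = sumF [seq G l | l <- s] p.
Proof.
elim: s => [|y s IH] H //=; rewrite /addF H ?mem_head // IH // => l hl; apply: H; by rewrite inE hl orbT.
Qed.

Lemma inA_sumF (s : seq MI) (F : MI -> Fn) : (forall x, x \in s -> inA cplx (F x)) -> inA cplx (sumF [seq F l | l <- s]).
Proof.
elim: s => [|x s IH] H /=; first exact: inA_zero.
apply: inA_add; first by apply: H; rewrite mem_head.
apply: IH => y hy; apply: H; by rewrite inE hy orbT.
Qed.

Lemma exists_pos (i : MI) : (0 < mabs i)%N -> exists mu, (0 < i mu)%N.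
Proof.
move=> H; apply/existsP; move: H; apply: contraLR; rewrite negb_exists => /forallP H.
rewrite -leqNgt leqn0 /mabs; apply/eqP; apply: big1 => mu _; apply/eqP; have := H mu; by rewrite lt0n negbK.
Qed.

Lemma mshift_dec (i : MI) mu : (0 < i mu)%N -> mshift mu (mdec mu i) = i.
Proof.
move=> H; apply/ffunP => nu; rewrite !ffunE; case: (nu =P mu) => [E|_] /=; last by rewrite subn0 addn0.
subst nu; by rewrite subn1 addn1 prednK.
Qed.

Lemma eps_self (k : MI) (phi : Aset -> Fn) a p : eps k phi a k p = phi a p.
Proof.
rewrite /eps mle_refl mbinom_self msub_self Dj_0 /nmulF /=.
case: (phi a p) => x y /=; congr pair; ring.
Qed.

Lemma vanish q (w : VF) : Eshift cplx q.+1 w -> (forall a i p, (mabs i <= q)%N -> w a i p = (0, 0)) ->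
  forall a i p, w a i p = (0, 0).
Proof.
elim: q w => [|q IH] w [Iw Hw] H0.
- have Hc : forall mu a i p, commD mu w a i p = (0, 0) by move=> mu; exact: (Hw mu).
  suff : forall n a i p, (mabs i <= n)%N -> w a i p = (0, 0) by move=> H a i p; exact: (H (mabs i)).
  elim=> [|n IHn] a i p Hi; first exact: H0.
  case: (leqP (mabs i) 0) => Hi0; first exact: H0.
  have [mu Hmu] := exists_pos Hi0.
  have E := mshift_dec Hmu.
  have Hj : (mabs (mdec mu i) <= n)%N by move: Hi; rewrite (mabs_dec Hmu).
  have Wz : w a (mdec mu i) = @zeroF m Aset by apply: functional_extensionality => p'; exact: IHn.
  have := Hc mu a (mdec mu i) p; rewrite /commD /subF Wz Dtot_zero E.
  case: (w a i p) => x y /= [H1 H2]; congr pair; lra.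
- have Hc : forall mu a i p, commD mu w a i p = (0, 0).
    move=> mu; apply: IH; first exact: Hw.
    move=> a i p Hi; rewrite /commD /subF.
    have Wz : w a i = @zeroF m Aset by apply: functional_extensionality => p'; apply: H0; exact: leq_trans Hi (leqnSn _).
    rewrite Wz Dtot_zero H0; last by rewrite mabs_shift ltnS.
    rewrite /=; congr pair; ring.
  suff : forall n a i p, (mabs i <= n)%N -> w a i p = (0, 0) by move=> H a i p; exact: (H (mabs i)).
  elim=> [|n IHn] a i p Hi; first by apply: H0; exact: leq_trans Hi (leq0n _).
  case: (leqP (mabs i) 0) => Hi0; first by apply: H0; exact: leq_trans Hi0 (leq0n _).
  have [mu Hmu] := exists_pos Hi0.
  have E := mshift_dec Hmu.
  have Hj : (mabs (mdec mu i) <= n)%N by move: Hi; rewrite (mabs_dec Hmu).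
  have Wz : w a (mdec mu i) = @zeroF m Aset by apply: functional_extensionality => p'; exact: IHn.
  have := Hc mu a (mdec mu i) p; rewrite /commD /subF Wz Dtot_zero E.
  case: (w a i p) => x y /= [H1 H2]; congr pair; lra.
Qed.

End Sums.

Open Scope R_scope.

Section Exist.
Variables (m : nat) (Aset : finType) (cplx : bool) (q : nat) (z : VF m Aset).
Local Notation Pt := (Point m Aset).
Local Notation Fn := (Fn m Aset).
Local Notation VF := (VF m Aset).
Local Notation MI := (MI m).

Fixpoint G (n : nat) : MI -> Aset -> Fn :=
  match n with
  | 0%N => fun _ _ => @zeroF m Aset
  | n'.+1 => fun k a => subF (z a k) (sumF [seq eps l (G n' l) a k | l <- [seq l <- mis m q | l != k]])
  end.

Lemma G_S n k a : G n.+1 k a = subF (z a k) (sumF [seq eps l (G n l) a k | l <- [seq l <- mis m q | l != k]]).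
Proof. by []. Qed.

Lemma lt_of_mle (l k : MI) : mle l k -> l != k -> (mabs l < mabs k)%N.
Proof.
move=> H ne; rewrite ltn_neqAle mle_abs // andbT; apply/eqP => E; move/eqP: ne; apply; exact: mle_abs_eq.
Qed.

Lemma G_stab n k : (mabs k < n)%N -> G n.+1 k = G n k.
Proof.
elim: n k => [|n IH] k // Hk.
apply: functional_extensionality => a; rewrite (G_S n.+1 k a) (G_S n k a).
congr (subF _ (sumF _)); apply/eq_in_map => l; rewrite mem_filter => /andP [ne _].
rewrite /eps; case: ifP => // Hlk.
rewrite IH //; apply: leq_trans (lt_of_mle Hlk ne) _; by rewrite -ltnS.
Qed.

Definition phiE (k : MI) : Aset -> Fn := G (mabs k).+1 k.

Lemma G_phi n k : (mabs k < n)%N -> G n k = phiE k.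
Proof.
move=> H; rewrite /phiE -(subnKC H).
elim: (n - (mabs k).+1)%N => [|d IH]; first by rewrite addn0.
by rewrite addnS G_stab ?IH // ltnS leq_addr.
Qed.

Hypothesis Hz : Eshift cplx q.+1 z.

Lemma inA_G n k a : inA cplx (G n k a).
Proof.
elim: n k a => [|n IH] k a /=; first exact: inA_zero.
apply: inA_sub; first exact: (proj1 Hz).
apply: inA_sumF => l _; exact: inDV_eps.
Qed.

Lemma sumEps_phiE k a p : (mabs k <= q)%N -> sumEps q phiE a k p = z a k p.
Proof.
move=> Hk; rewrite /sumEps (@sumF_split m Aset _ _ k p (uniq_mis m q)) ?mem_mis //.
rewrite /addF eps_self {1 2}/phiE /=.
set S1 := sumF _. set S2 := sumF _.
have -> : S1 p = S2 p.
  rewrite /S1 /S2; apply: sumF_ext_in => l; rewrite mem_filter => /andP [ne _].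
  rewrite /eps; case: ifP => // Hlk. rewrite G_phi //; exact: lt_of_mle.
rewrite /subF /=. case: (z a k p) => x y /=; congr pair; ring.
Qed.

Lemma existence : exists phi : MI -> Aset -> Fn,
  (forall k a, (mabs k <= q)%N -> inA cplx (phi k a)) /\ (forall a i p, z a i p = sumEps q phi a i p).
Proof.
exists phiE; split; first by move=> k a _; exact: inA_G.
have Hs : Eshift cplx q.+1 (sumEps q phiE) by apply: E_sumEps => k a _; exact: inA_G.
set w := addV z (scalV (-1) (sumEps q phiE)).
have Hw : Eshift cplx q.+1 w by apply: E_add => //; exact: E_scal.
have := vanish Hw.
have H0 : forall a i p, (mabs i <= q)%N -> w a i p = (0, 0).
  move=> a i p Hi; rewrite /w /addV /scalV /addF /scalF sumEps_phiE //=.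
  congr pair; ring.
move=> /(_ H0) Hv a i p; have := Hv a i p.
rewrite /w /addV /scalV /addF /scalF.
case: (z a i p) => x y; case: (sumEps q phiE a i p) => x' y' /= [H1 H2]; congr pair; lra.
Qed.

End Exist.

Section Uniq.
Variables (m : nat) (Aset : finType) (q : nat).
Local Notation Fn := (Fn m Aset).
Local Notation MI := (MI m).

Lemma uniqueness (phi psi : MI -> Aset -> Fn) :
  (forall a i p, sumEps q phi a i p = sumEps q psi a i p) ->
  forall k a p, (mabs k <= q)%N -> phi k a p = psi k a p.
Proof.
move=> H.
suff : forall n k a p, (mabs k <= q)%N -> (mabs k < n)%N -> phi k a p = psi k a p.
  move=> S k a p Hk; exact: (S (mabs k).+1).
elim=> [|n IH] k a p Hk Hn //.
have := H a k p; rewrite /sumEps !(@sumF_split m Aset _ _ k p (uniq_mis m q)) ?mem_mis // /addF !eps_self.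
have -> : forall F : MI -> Fn, (forall l, l \in [seq l <- mis m q | l != k] -> F l = (fun p => eps l (psi l) a k p)) ->
   sumF [seq F l | l <- [seq l <- mis m q | l != k]] p = sumF [seq eps l (psi l) a k | l <- [seq l <- mis m q | l != k]] p.
  move=> F HF; apply: sumF_ext_in => l hl; by rewrite HF.
- case: (phi k a p) => x y; case: (psi k a p) => x' y' /= [H1 H2]; congr pair; lra.
- move=> l; rewrite mem_filter => /andP [ne hl].
  apply: functional_extensionality => p'; rewrite /eps; case: ifP => // Hlk.
  have Hl := lt_of_mle Hlk ne.
  have -> // : phi l = psi l.
  apply: functional_extensionality => a'; apply: functional_extensionality => p''.
  apply: IH; [by rewrite -mem_mis | exact: leq_trans Hl Hn].
Qed.
End Uniq.

Close Scope R_scope.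
Theorem mainTheorem17 (cplx : bool) (m : nat) (Aset : finType) (q : nat) :
  (forall z : VF m Aset,
     Ecal cplx q z <->
     exists phi : MI m -> Aset -> Fn m Aset,
       (forall k a, mabs k <= q -> inA cplx (phi k a)) /\
       (forall a i p, z a i p = sumEps q phi a i p))
  /\
  (forall phi psi : MI m -> Aset -> Fn m Aset,
     (forall k a, mabs k <= q -> inA cplx (phi k a) /\ inA cplx (psi k a)) ->
     (forall a i p, sumEps q phi a i p = sumEps q psi a i p) ->
     forall k a p, mabs k <= q -> phi k a p = psi k a p).
Proof.
split.
  move=> z; split; first exact: existence.
  move=> [phi [H1 H2]].
  have -> : z = sumEps q phi by apply: VF_ext.
  exact: E_sumEps.
move=> phi psi _ H; exact: uniqueness.
Qed.
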